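(* Let $\Sigma$ be a real symmetric positive definite $n\times n$ matrix and let $D_0$ be the diagonal matrix with $[D_0]_{ii}=\dfrac{1}{2[\Sigma^{-1}]_{ii}}$, $i=1,\dots,n$. Let \[\mathcal S(\Sigma)=\{(\hat\Sigma,\tilde\Sigma)\mid \Sigma=\hat\Sigma+\tilde\Sigma,\ \hat\Sigma\ge0,\ \tilde\Sigma\ge 0,\ \tilde\Sigma\text{ diagonal}\},\] and let $(\hat\Sigma_{\rm opt},\tilde\Sigma_{\rm opt})$ be the (unique) maximizer over $\mathcal S(\Sigma)$ of $\operatorname{trace}(\hat\Sigma-\hat\Sigma\Sigma^{-1}\hat\Sigma)$ (equivalently, of $\min_{K\in\mathbb R^{n\times n}}L(K,\hat\Sigma,\tilde\Sigma)$, where $L(K,\hat\Sigma,\tilde\Sigma)=\operatorname{trace}(\hat\Sigma-K\hat\Sigma-\hat\Sigma K'+K(\hat\Sigma+\tilde\Sigma)K')$). If $\Sigma-D_0\ge 0$, then $\tilde\Sigma_{\rm opt}=D_0$ and $\hat\Sigma_{\rm opt}=\Sigma-D_0$. Otherwise, $\tilde\Sigma_{\rm opt}\le D_0$ and $\hat\Sigma_{\rm opt}$ is singular.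
   Context: All matrices are real symmetric $n\times n$ unless stated; $M\ge0$ means positive semidefinite and $A\le B$ means $B-A\ge 0$. $L$ is the trace of the mean-square error of the estimate $K\mathbf x$ of $\hat{\mathbf x}$ when $\mathbf x=\hat{\mathbf x}+\tilde{\mathbf x}$ with uncorrelated zero-mean components of covariances $\hat\Sigma,\tilde\Sigma$. *)

(* Defs.v *)
From HB Require Import structures.
From mathcomp Require Import all_boot all_order all_algebra.
Set Implicit Arguments. Unset Strict Implicit. Unset Printing Implicit Defensive.
Import Order.TTheory GRing.Theory Num.Theory.
Local Open Scope ring_scope.

Definition symmetricmx (R : realFieldType) (n : nat) (A : 'M[R]_n) : Prop :=
  A^T = A.

Definition psdmx (R : realFieldType) (n : nat) (A : 'M[R]_n) : Prop :=
  symmetricmx A /\ forall v : 'cV[R]_n, 0 <= (v^T *m A *m v) 0 0.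

Definition pdmx (R : realFieldType) (n : nat) (A : 'M[R]_n) : Prop :=
  symmetricmx A /\ forall v : 'cV[R]_n, v != 0 -> 0 < (v^T *m A *m v) 0 0.

Definition loewner_le (R : realFieldType) (n : nat) (A B : 'M[R]_n) : Prop :=
  psdmx (B - A).

Definition D0 (R : realFieldType) (n : nat) (S : 'M[R]_n) : 'M[R]_n :=
  diag_mx (\row_i (2 * invmx S i i)^-1).

Definition decomp_set (R : realFieldType) (n : nat) (S Sh St : 'M[R]_n) : Prop :=
  S = Sh + St /\ psdmx Sh /\ psdmx St /\ is_diag_mx St.

Definition objective (R : realFieldType) (n : nat) (S Sh : 'M[R]_n) : R :=
  \tr (Sh - Sh *m invmx S *m Sh).

Definition is_opt (R : realFieldType) (n : nat) (S Sh St : 'M[R]_n) : Prop :=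
  decomp_set S Sh St /\
  forall Sh' St' : 'M[R]_n, decomp_set S Sh' St' -> objective S Sh' <= objective S Sh.

(* Main.v *)
Require Import Defs.
From HB Require Import structures.
From mathcomp Require Import all_boot all_order all_algebra.
From mathcomp Require Import ring lra.
Import Order.TTheory GRing.Theory Num.Theory.
Local Open Scope ring_scope.

Lemma aux1 (R:realFieldType) (a b c : R) : a - c*a^+2 <= b - c*b^+2 -> 0 < c*((b-a)*(b-a)) -> 2*c*a = 1 -> 0 < c -> False.
Proof. move=> h1 h2 h3 h4. have h5 : (a - b) * (1 - 2*c*a) = 0 by rewrite h3 subrr mulr0. nra. Qed.
Lemma aux2 (R:realFieldType) (B t p c : R) : 0 < t -> t * c <= 1 -> 0 <= B - 2 * (t * p) * p + (t * p) ^+ 2 * c -> t * p ^+ 2 <= B.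
Proof. move=> h1 h2 h3. have h4 : 0 <= t * p ^+ 2 * (1 - t * c). by rewrite mulr_ge0 // ?subr_ge0 // mulr_ge0 ?sqr_ge0 // ltW. nra. Qed.
Lemma aux3 (R:realFieldType) (e x t s : R) : 2 * s * e = 1 -> x + t <= e -> 0 < t -> 0 < s -> x + t - s * (x + t)^+2 <= x - s * x ^+ 2 -> False.
Proof. move=> h1 h2 h3 h4 h5.
have h6 : 0 <= t * (s * (e - x - t)).
  apply: mulr_ge0; first exact: ltW. apply: mulr_ge0; [exact: ltW | lra].
have h7 : 0 < t * (s * t) by rewrite !mulr_gt0.
have h8 : t * (2 * s * e - 1) = 0 by rewrite h1 subrr mulr0.
nra. Qed.

Arguments aux1 {R a b c}. Arguments aux2 {R B t p c}. Arguments aux3 {R e x t s}.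
Section H.
Variable R : realFieldType.
Variable n : nat.
Implicit Types A B : 'M[R]_n.
Implicit Types v x y : 'cV[R]_n.

Definition bl A x y := (x^T *m A *m y) 0 0.

Lemma blE A x y : bl A x y = \sum_i \sum_j x i 0 * A i j * y j 0.
Proof.
rewrite /bl mxE; under eq_bigr => k _ do rewrite mxE big_distrl /=.
rewrite exchange_big; apply: eq_bigr => i _; apply: eq_bigr => j _.
by rewrite !mxE.
Qed.

Lemma bl_diag (d : 'rV[R]_n) v : bl (diag_mx d) v v = \sum_i d 0 i * v i 0 ^+ 2.
Proof.
rewrite blE; apply: eq_bigr => i _.
rewrite (bigD1 i) //= big1 ?addr0 => [|j ji]; last by rewrite !mxE eq_sym (negbTE ji) mulr0n mulr0 mul0r.
by rewrite !mxE eqxx mulr1n; ring.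
Qed.

Lemma psd_diag (d : 'rV[R]_n) : (forall i, 0 <= d 0 i) -> psdmx (diag_mx d).
Proof.
move=> h; split; first exact: tr_diag_mx.
move=> v; rewrite -/(bl _ v v) bl_diag; apply: sumr_ge0 => i _.
by apply: mulr_ge0 => //; apply: sqr_ge0.
Qed.

Lemma bl_delta A i : bl A (delta_mx i 0) (delta_mx i 0) = A i i.
Proof.
rewrite blE (bigD1 i) //= [X in _ + X]big1 => [|k ki]; last first.
  by apply: big1 => j _; rewrite !mxE (negbTE ki) /= mul0r mul0r.
rewrite addr0 (bigD1 i) //= [X in _ + X]big1 => [|k ki]; last by rewrite !mxE (negbTE ki) /= mulr0.
by rewrite !mxE eqxx /= mulr1 mul1r addr0.
Qed.

Lemma psd_entry A i : psdmx A -> 0 <= A i i.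
Proof. by case=> _ h; rewrite -bl_delta; apply: h. Qed.

Lemma blDm A B x y : bl (A + B) x y = bl A x y + bl B x y.
Proof. by rewrite /bl mulmxDr mulmxDl mxE. Qed.

Lemma blBm A B x y : bl (A - B) x y = bl A x y - bl B x y.
Proof. by rewrite /bl mulmxBr mulmxBl mxE mxE mxE. Qed.

Lemma psdD A B : psdmx A -> psdmx B -> psdmx (A + B).
Proof.
case=> sA hA [sB hB]; split; first by rewrite /Defs.symmetricmx; apply/matrixP => i j; rewrite !mxE; move: sA sB => /matrixP sA /matrixP sB; rewrite -sA -sB !mxE.
by move=> v; rewrite -/(bl _ v v) blDm addr_ge0 //; [apply: hA | apply: hB].
Qed.

Lemma bl_sym A x y : Defs.symmetricmx A -> bl A x y = bl A y x.
Proof.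
move=> sA; rewrite /bl; transitivity ((x^T *m A *m y)^T 0 0); first by rewrite [RHS]mxE.
by rewrite !trmx_mul trmxK sA mulmxA.
Qed.

Lemma bl_sub A v x a : Defs.symmetricmx A ->
  bl A (v - a *: x) (v - a *: x) = bl A v v - 2 * a * bl A x v + a ^+ 2 * bl A x x.
Proof.
move=> sA; have E : bl A v x = bl A x v by apply: bl_sym.
have T : (v - a *: x)^T = v^T - a *: x^T.
  by apply/matrixP => k l; rewrite !mxE.
move: E; rewrite /bl T !(mulmxBl, mulmxBr) -!scalemxAl -!scalemxAr !mxE => ->; ring.
Qed.

Lemma inv_bl A i v : Defs.symmetricmx A -> A \in unitmx ->
  bl A (invmx A *m delta_mx i 0) v = v i 0 /\
  bl A (invmx A *m delta_mx i 0) (invmx A *m delta_mx i 0) = invmx A i i.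
Proof.
move=> sA uA.
have K : (invmx A *m delta_mx i (0 : 'I_1))^T *m A = delta_mx (0 : 'I_1) i.
  by rewrite trmx_mul trmx_delta trmx_inv sA -mulmxA mulVmx // mulmx1.
rewrite /bl K -!rowE !mxE; split => //.
rewrite (bigD1 i) //= [X in _ + X]big1 => [|j ji]; last by rewrite !mxE (negbTE ji) /= mulr0.
by rewrite !mxE eqxx /= mulr1 addr0.
Qed.

Lemma pd_unit A : pdmx A -> A \in unitmx.
Proof.
case=> _ hA; rewrite unitmxE unitfE; apply/negP => /det0P [v v0 vA].
have := hA v^T; rewrite trmx_eq0 => /(_ v0).
by rewrite trmxK vA mul0mx mxE ltxx.
Qed.

Lemma obj_formula S (d : 'rV[R]_n) : S \in unitmx ->
  objective S (S - diag_mx d) = \sum_i (d 0 i - invmx S i i * d 0 i ^+ 2).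
Proof.
move=> uS; rewrite /objective.
set D := diag_mx d; set Si := invmx S.
have -> : (S - D) *m Si *m (S - D) = (S - D) - (D - D *m Si *m D).
  rewrite mulmxBl mulmxV // mulmxBl mul1mx mulmxBr -(mulmxA D Si S) mulVmx // mulmx1.
  by [].
rewrite opprB addrC subrK raddfB /= /D mxtrace_diag /mxtrace -sumrB.
apply: eq_bigr => i _; rewrite mul_mx_diag mul_diag_mx !mxE; ring.
Qed.

Definition upd (d : 'rV[R]_n) i e : 'rV[R]_n := \row_j (if j == i then e else d 0 j).

Lemma sym_sub_diag S (d : 'rV[R]_n) : Defs.symmetricmx S -> Defs.symmetricmx (S - diag_mx d).
Proof.
move=> sS; apply/matrixP => k l; move/matrixP: sS => /(_ k l); rewrite !mxE => E.
rewrite E; have [->|kl] := eqVneq k l; first by [].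
by rewrite !mulr0n.
Qed.

Lemma psd_upd S (d : 'rV[R]_n) i e : Defs.symmetricmx S ->
  (forall v, (e - d 0 i) * v i 0 ^+ 2 <= bl (S - diag_mx d) v v) ->
  psdmx (S - diag_mx (upd d i e)).
Proof.
move=> sS h; split; first exact: sym_sub_diag.
move=> v; rewrite -/(bl _ v v).
have -> : S - diag_mx (upd d i e) = (S - diag_mx d) - diag_mx (upd d i e - d).
  by rewrite raddfB /= opprB addrA subrK.
rewrite blBm bl_diag subr_ge0.
rewrite (bigD1 i) //= [X in _ + X]big1 => [|j ji]; last by rewrite !mxE (negbTE ji) subrr mul0r.
by rewrite addr0 !mxE eqxx; apply: h.
Qed.

Lemma obj_update (Si : 'M[R]_n) (d : 'rV[R]_n) i e :
  \sum_j (upd d i e 0 j - Si j j * upd d i e 0 j ^+ 2) =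
  \sum_j (d 0 j - Si j j * d 0 j ^+ 2) + ((e - Si i i * e ^+ 2) - (d 0 i - Si i i * d 0 i ^+ 2)).
Proof.
apply/eqP; rewrite -subr_eq0 opprD addrA -sumrB subr_eq0; apply/eqP.
rewrite (bigD1 i) //= [X in _ + X]big1 => [|j ji]; last by rewrite !mxE (negbTE ji) subrr.
by rewrite addr0 !mxE eqxx.
Qed.

Lemma s_pos (S : 'M[R]_n) i : pdmx S -> 0 < invmx S i i.
Proof.
move=> pdS; have uS := pd_unit _ pdS; case: pdS => sS hS.
pose x : 'cV[R]_n := invmx S *m delta_mx i 0.
have Sx : S *m x = delta_mx i 0 by rewrite /x mulmxA mulmxV // mul1mx.
have [_ <-] := inv_bl _ i x sS uS; apply: hS.
apply/negP => /eqP x0; have x0' : x = 0 := x0.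
move: Sx; rewrite x0' mulmx0 => /matrixP /(_ i 0); rewrite !mxE eqxx /= => /eqP.
by rewrite eq_sym oner_eq0.
Qed.
End H.
Arguments bl {R n}. Arguments upd {R n}. Arguments inv_bl {R n}. Arguments pd_unit {R n}. Arguments psd_upd {R n}. Arguments s_pos {R n}. Arguments obj_formula {R n}. Arguments psd_diag {R n}. Arguments psd_entry {R n}. Arguments bl_sub {R n}. Arguments obj_update {R n}. Arguments blBm {R n}. Arguments bl_diag {R n}.

Theorem proposition11 (R : realFieldType) (n : nat) (S Sh St : 'M[R]_n) :
  pdmx S -> is_opt S Sh St ->
  (psdmx (S - D0 S) -> St = D0 S /\ Sh = S - D0 S) /\
  (~ psdmx (S - D0 S) -> loewner_le St (D0 S) /\ Sh \notin unitmx).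
Proof.
move=> pdS [[eS [pSh [pSt dSt]]] opt].
have uS := pd_unit S pdS; have [sS _] := pdS.
have /diag_mxP [d Ed] := dSt; subst St.
have EhS : Sh = S - diag_mx d by rewrite eS addrK.
pose s (j : 'I_n) : R := invmx S j j.
have spos : forall j, 0 < s j by move=> j; apply: s_pos.
have dge0 : forall j, 0 <= d 0 j.
  by move=> j; have := psd_entry _ j pSt; rewrite !mxE eqxx mulr1n.
pose obj (d' : 'rV[R]_n) := \sum_j (d' 0 j - s j * d' 0 j ^+ 2).
have key : forall d' : 'rV[R]_n, (forall j, 0 <= d' 0 j) -> psdmx (S - diag_mx d') -> obj d' <= obj d.
  move=> d' h1 h2; have := opt (S - diag_mx d') (diag_mx d').
  rewrite EhS !obj_formula //; apply; split; first by rewrite subrK.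
  by split => //; split; [exact: psd_diag | exact: diag_mx_is_diag].
have pert : forall i e, 0 <= e -> psdmx (S - diag_mx (upd d i e)) ->
    e - s i * e ^+ 2 <= d 0 i - s i * d 0 i ^+ 2.
  move=> i e e0 hp.
  have h1 : forall j, 0 <= upd d i e 0 j by move=> j; rewrite mxE; case: ifP.
  by have := key _ h1 hp; rewrite /obj (obj_update (invmx S)) gerDl subr_le0.
pose d0 : 'rV[R]_n := \row_j (2 * s j)^-1.
have ED0 : D0 S = diag_mx d0 by [].
have d0ge0 : forall j, 0 <= d0 0 j.
  by move=> j; rewrite mxE invr_ge0 mulr_ge0 // ltW.
have d0E : forall j, 2 * s j * d0 0 j = 1.
  by move=> j; rewrite mxE mulfV // mulf_neq0 // ?pnatr_eq0 // gt_eqF.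
split.
  move=> pD0; have H := key d0 d0ge0 pD0.
  have Hd : d = d0.
    have E : obj d0 - obj d = \sum_j s j * (d 0 j - d0 0 j) ^+ 2.
      rewrite /obj -sumrB; apply: eq_bigr => j _.
      apply/eqP; rewrite -subr_eq0.
      have -> : d0 0 j - s j * d0 0 j ^+ 2 - (d 0 j - s j * d 0 j ^+ 2) -
          s j * (d 0 j - d0 0 j) ^+ 2 = (d0 0 j - d 0 j) * (1 - 2 * s j * d0 0 j).
        by move: (d0 0 j) (d 0 j) (s j) => a b c; ring.
      by rewrite d0E subrr mulr0.
    have ge : forall j, true -> 0 <= s j * (d 0 j - d0 0 j) ^+ 2.
      by move=> j _; rewrite mulr_ge0 // ?sqr_ge0 // ltW.
    have Z : \sum_j s j * (d 0 j - d0 0 j) ^+ 2 = 0.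
      apply/le_anti; rewrite sumr_ge0 // andbT -E subr_le0 //.
    apply/rowP => j; have := psumr_eq0P ge Z; move=> /(_ j isT) /eqP.
    rewrite mulf_eq0 gt_eqF //= sqrf_eq0 subr_eq0 => /eqP ->.
    by rewrite mxE.
  by subst d; rewrite EhS ED0.
move=> nP.
have Dle : forall i, d 0 i <= d0 0 i.
  move=> i; rewrite leNgt; apply/negP => lt.
  have := pert i (d0 0 i) (d0ge0 i).
  have hp : psdmx (S - diag_mx (upd d i (d0 0 i))).
    apply: psd_upd => // v; apply: (@le_trans _ _ 0).
      by rewrite mulr_le0_ge0 ?sqr_ge0 // subr_le0 ltW.
    by rewrite -EhS; case: pSh => _; apply.
  move=> /(_ hp) h.
  have lt2 : 0 < d 0 i - d0 0 i by rewrite subr_gt0.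
  have h2 := mulr_gt0 (spos i) (mulr_gt0 lt2 lt2).
  exact: (aux1 h h2 (d0E i) (spos i)).
split.
  rewrite /loewner_le ED0 -raddfB; apply: psd_diag => j.
  have e : (d0 - d) 0 j = d0 0 j - d 0 j by rewrite !mxE.
  by rewrite e subr_ge0; exact: Dle.
apply/negP => uSh.
have [i lt] : exists i, d 0 i < d0 0 i.
  case: (boolP [exists i, d 0 i < d0 0 i]) => [/existsP [i h]|/existsPn h]; first by exists i.
  exfalso; apply: nP.
  have Hd : d = d0.
    by apply/rowP => j; apply/le_anti; rewrite Dle /= leNgt h.
  by rewrite ED0 -Hd -EhS.
have sSh : Defs.symmetricmx Sh by case: pSh.
pose x : 'cV[R]_n := invmx Sh *m delta_mx i 0.
pose c := invmx Sh i i.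
have c0 : 0 <= c.
  rewrite /c; have [_ <-] := inv_bl Sh i x sSh uSh; by case: pSh => _; apply.
pose u := d0 0 i - d 0 i.
have u0 : 0 < u by rewrite subr_gt0.
have cu0 : 0 < 1 + c * u by have := mulr_ge0 c0 (ltW u0); lra.
pose t := u / (1 + c * u).
have t0 : 0 < t by rewrite divr_gt0.
have tu : t <= u.
  rewrite /t ler_pdivrMr //; have := mulr_ge0 (ltW u0) (mulr_ge0 c0 (ltW u0)); nra.
have tc : t * c <= 1.
  rewrite /t mulrAC ler_pdivrMr // mul1r; lra.
have := pert i (d 0 i + t).
have hp : psdmx (S - diag_mx (upd d i (d 0 i + t))).
  apply: psd_upd => // v; rewrite -EhS.
  have -> : d 0 i + t - d 0 i = t by rewrite addrC addKr.
  have h := bl_sub Sh v x (t * v i 0) sSh.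
  have [b1 b2] := inv_bl Sh i v sSh uSh.
  rewrite b1 b2 -/c in h.
  have hn : 0 <= bl Sh (v - (t * v i 0) *: x) (v - (t * v i 0) *: x) by case: pSh => _; apply.
  rewrite h in hn; exact: aux2 t0 tc hn.
move=> /(_ (addr_ge0 (dge0 i) (ltW t0)) hp) h.
apply: (aux3 (d0E i) _ t0 (spos i) h).
by rewrite /u in tu; lra.
Qed.
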